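(* There exists a (weighted) instance of the atomic two-stage facility location game that admits no subgame perfect equilibrium.
   Context: Atomic two-stage facility location game. An instance is a triple $(H,U,k)$: $H=(V,E,w)$ is a finite directed graph with vertex weights $w:V\to\mathbb{Q}_{>0}$; $F$ is a set of $k$ facility agents; $U:F\to 2^V$ assigns to each facility agent $f$ a set $U(f)\subseteq V$ of feasible locations. The vertices are simultaneously the clients and the possible locations. A facility placement profile (FPP) is a vector $\mathbf{s}=(s_f)_{f\in F}$ with $s_f\in U(f)$ (several facilities may choose the same vertex); $S$ denotes the set of all FPPs. For a client $v$ let $N(v)=\{v\}\cup\{u:(v,u)\in E\}$ and $N_{\mathbf{s}}(v)=\{f\in F: s_f\in N(v)\}$. A client profile for $\mathbf{s}$ is $\sigma(\mathbf{s})$, assigning to each client $v$ numbers $\sigma(\mathbf{s})_{v,f}\in[0,1]$ ($f\in F$) with $\sigma(\mathbf{s})_{v,f}=0$ for $f\notin N_{\mathbf{s}}(v)$ and $\sum_{f\in N_{\mathbf{s}}(v)}\sigma(\mathbf{s})_{v,f}=1$ whenever $N_{\mathbf{s}}(v)\neq\varnothing$. A full client profile $\sigma$ specifies a client profile $\sigma(\mathbf{s}')$ for every $\mathbf{s}'\in S$. The load of facility $f$ is $\ell_f(\mathbf{s},\sigma)=\sum_{v\in V}\sigma(\mathbf{s})_{v,f}w(v)$. The cost of client $v$ is $L_v(\mathbf{s},\sigma)=w(v)+\sum_{f\in N_{\mathbf{s}}(v)}\sigma(\mathbf{s})_{v,f}\,\ell_{-v,f}(\mathbf{s},\sigma)$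 where $\ell_{-v,f}(\mathbf{s},\sigma)=\sum_{u\neq v}\sigma(\mathbf{s})_{u,f}w(u)$. $\sigma(\mathbf{s})$ is a client equilibrium if no client $v$ can strictly decrease $L_v$ by unilaterally changing her own distribution to another feasible one; $\sigma$ is a full client equilibrium if $\sigma(\mathbf{s}')$ is a client equilibrium for every $\mathbf{s}'\in S$. A pair $(\mathbf{s},\sigma)$ is a subgame perfect equilibrium (SPE) if $\sigma$ is a full client equilibrium and there is no facility $f$ and location $s'_f\in U(f)$ with $\ell_f((s'_f,\mathbf{s}_{-f}),\sigma)>\ell_f(\mathbf{s},\sigma)$. *)

(* Defs.v *)
From HB Require Import structures.
From mathcomp Require Import all_boot all_order all_algebra.
From mathcomp Require Import reals.
Set Implicit Arguments. Unset Strict Implicit. Unset Printing Implicit Defensive.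
Import Order.TTheory GRing.Theory Num.Theory.
Local Open Scope ring_scope.

Section Game.
(* An instance (H, U, k): H = (V, E, w), facility agents F with k = #|F|. *)
Variables (V F : finType) (E : rel V) (w : V -> rat) (U : F -> {set V}).
Variable R : realType.

Definition FPP := {ffun F -> V}.
Definition feasible (s : FPP) : Prop := forall f, s f \in U f.

Definition nbh (v u : V) : bool := (u == v) || E v u.
Definition Ns (s : FPP) (v : V) : pred F := fun f => nbh v (s f).

(* a client profile for s: p v f = sigma(s)_{v,f} *)
Definition cprofile := V -> F -> R.

Definition valid_row (s : FPP) (v : V) (q : F -> R) : Prop :=
  (forall f, 0 <= q f <= 1) /\
  (forall f, ~~ Ns s v f -> q f = 0) /\
  ((exists f, Ns s v f) -> \sum_(f | Ns s v f) q f = 1).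

Definition valid_profile (s : FPP) (p : cprofile) : Prop :=
  forall v, valid_row s v (p v).

Definition wR (v : V) : R := ratr (w v).

Definition load (p : cprofile) (f : F) : R := \sum_v p v f * wR v.

Definition load_minus (p : cprofile) (v : V) (f : F) : R :=
  \sum_(u | u != v) p u f * wR u.

Definition cost (s : FPP) (p : cprofile) (v : V) : R :=
  wR v + \sum_(f | Ns s v f) p v f * load_minus p v f.

Definition deviate (p : cprofile) (v : V) (q : F -> R) : cprofile :=
  fun u => if u == v then q else p u.

Definition client_equilibrium (s : FPP) (p : cprofile) : Prop :=
  valid_profile s p /\
  forall v (q : F -> R), valid_row s v q ->
    cost s p v <= cost s (deviate p v q) v.

Definition full_profile := FPP -> cprofile.

Definition full_client_equilibrium (sigma : full_profile) : Prop :=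
  forall s', feasible s' -> client_equilibrium s' (sigma s').

Definition move (s : FPP) (f : F) (x : V) : FPP :=
  [ffun g => if g == f then x else s g].

Definition SPE (s : FPP) (sigma : full_profile) : Prop :=
  feasible s /\ full_client_equilibrium sigma /\
  ~ (exists f x, x \in U f /\ load (sigma (move s f x)) f > load (sigma s) f).

End Game.

(* Main.v *)
Require Import Defs.
From HB Require Import structures.
From mathcomp Require Import all_boot all_order all_algebra.
From mathcomp Require Import reals.
From mathcomp Require Import ring lra.
Import Order.TTheory GRing.Theory Num.Theory.
Local Open Scope ring_scope.
Set Implicit Arguments. Unset Strict Implicit. Unset Printing Implicit Defensive.

Section Gen.
Variables (V F : finType) (E : rel V) (w : V -> rat) (R : realType).
Implicit Types (s : FPP V F) (p : cprofile V F R).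

Lemma lm_dev p v q f : load_minus w (deviate p v q) v f = load_minus w p v f.
Proof. apply: eq_bigr => u /negbTE uv; by rewrite /deviate uv. Qed.

Lemma row0 s v (q : F -> R) f : valid_row E s v q -> ~~ Ns E s v f -> q f = 0.
Proof. by case=> _ [H _]; apply: H. Qed.

Lemma forced s p v f : client_equilibrium E w s p -> Ns E s v f ->
  (forall g, g != f -> Ns E s v g -> load_minus w p v f < load_minus w p v g) ->
  forall g, p v g = (g == f)%:R.
Proof.
move=> [val eqm] Nf Hlt.
pose q := fun g => (g == f)%:R : R.
have vq : valid_row E s v q.
  split; first by move=> g; rewrite /q /=; case: (g == f); rewrite /= ?lexx ?ler01 ?le0r ?ler01 ?lexx.
  split; first (move=> g Ng; rewrite /q /=; case: (eqVneq g f) => [gf|gf]; [by rewrite gf Nf in Ng | by rewrite ?(negbTE gf)]).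
  move=> _; rewrite (bigD1 f) //= big1 /q /= ?eqxx ?addr0 //.
  by move=> g /andP [_ /negbTE ->].
have Hc := eqm v q vq; rewrite /cost lerD2l in Hc.
have E1 : \sum_(f0 | Ns E s v f0) deviate p v q v f0 * load_minus w (deviate p v q) v f0
   = load_minus w p v f.
  rewrite (bigD1 f) //= big1 /deviate eqxx /q ?eqxx ?mul1r ?lm_dev ?addr0 //.
  by move=> g /andP [_ /negbTE ->]; rewrite mul0r.
rewrite E1 in Hc.
have [vr0 [vr1 vr2]] := val v.
have S1 : \sum_(g | Ns E s v g) p v g = 1 by apply: vr2; exists f.
have Hnn : forall g, Ns E s v g -> 0 <= p v g * (load_minus w p v g - load_minus w p v f).
  move=> g Ng; case: (eqVneq g f) => [->|gf]; first by rewrite subrr mulr0.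
  apply: mulr_ge0; first by case/andP: (vr0 g).
  by rewrite subr_ge0 ltW // Hlt.
have Hsum : \sum_(g | Ns E s v g) p v g * (load_minus w p v g - load_minus w p v f) = 0.
  apply/eqP; rewrite eq_le; apply/andP; split; last exact: sumr_ge0.
  under eq_bigr => g _ do rewrite mulrBr.
  by rewrite sumrB -mulr_suml S1 mul1r subr_le0.
have Hz : forall g, g != f -> p v g = 0.
  move=> g gf; case Ng: (Ns E s v g); last by apply: vr1; rewrite Ng.
  have := psumr_eq0P Hnn Hsum Ng.
  have h : 0 < load_minus w p v g - load_minus w p v f by rewrite subr_gt0 Hlt.
  by move/eqP; rewrite mulf_eq0 (gt_eqF h) orbF => /eqP.
move=> g; case: (eqVneq g f) => [->|gf]; last by rewrite Hz.
move: S1; rewrite (bigD1 f) //= big1 ?addr0 // => g' /andP [_ /Hz] //.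
Qed.
End Gen.

Definition v0 : 'I_4 := @Ordinal 4 0 isT.
Definition v1 : 'I_4 := @Ordinal 4 1 isT.
Definition v2 : 'I_4 := @Ordinal 4 2 isT.
Definition v3 : 'I_4 := @Ordinal 4 3 isT.
Definition f0 : 'I_2 := @Ordinal 2 0 isT.
Definition f1 : 'I_2 := @Ordinal 2 1 isT.

Definition Eex : rel 'I_4 := fun v u =>
  match val v, val u with 0, 1 | 0, 2 | 1, 2 | 1, 3 | 3, 0 => true | _, _ => false end.
Definition wex (v : 'I_4) : rat :=
  match val v with 0 => 5%:R | 1 => 4%:R | 2 => 6%:R | _ => 3%:R end.
Definition Uex (f : 'I_2) : {set 'I_4} :=
  if val f == 0%N then [set v2; v0] else [set v3; v1].

Lemma ord2 (f : 'I_2) : f = f0 \/ f = f1.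
Proof. case: f => [[|[|n]] H]; [left|right|by []]; exact: val_inj. Qed.

Lemma ord4 (v : 'I_4) : [\/ v = v0, v = v1, v = v2 | v = v3].
Proof.
case: v => [[|[|[|[|n]]]] H]; [constructor 1|constructor 2|constructor 3|constructor 4|by []];
  exact: val_inj.
Qed.

Lemma sum4 (R : realType) (G : 'I_4 -> R) : \sum_i G i = G v0 + G v1 + G v2 + G v3.
Proof.
rewrite !big_ord_recl big_ord0 addr0 !addrA.
by congr (_ + _ + _ + _); apply: congr1; apply: val_inj.
Qed.

Section Sub.
Variable R : realType.
Implicit Types (s : FPP 'I_4 'I_2) (p : cprofile 'I_4 'I_2 R).

Lemma lmE p v f : load_minus wex p v f =
  (v0 != v)%:R * (p v0 f * wR wex R v0) + (v1 != v)%:R * (p v1 f * wR wex R v1)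
 + (v2 != v)%:R * (p v2 f * wR wex R v2) + (v3 != v)%:R * (p v3 f * wR wex R v3).
Proof.
rewrite /load_minus big_mkcond sum4 /=.
by case: (v0 != v); case: (v1 != v); case: (v2 != v); case: (v3 != v); rewrite ?mul1r ?mul0r.
Qed.

Lemma loadE p f : load wex p f =
  p v0 f * wR wex R v0 + p v1 f * wR wex R v1 + p v2 f * wR wex R v2 + p v3 f * wR wex R v3.
Proof. by rewrite /load sum4. Qed.

Lemma wRE : (wR wex R v0 = 5%:R) * (wR wex R v1 = 4%:R) * (wR wex R v2 = 6%:R) * (wR wex R v3 = 3%:R).
Proof. by rewrite /wR /wex /= !ratr_nat. Qed.

End Sub.

Lemma unc (V F : finType) (E : rel V) (w : V -> rat) (R : realType) s (p : cprofile V F R) v :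
  client_equilibrium E w s p -> (forall g, ~~ Ns E s v g) -> forall g, p v g = 0.
Proof. by move=> [vp _] H g; apply: (row0 (vp v)). Qed.

Lemma bnd (V F : finType) (E : rel V) (w : V -> rat) (R : realType) s (p : cprofile V F R) v g :
  client_equilibrium E w s p -> 0 <= p v g /\ p v g <= 1.
Proof. by move=> [vp _]; have [/(_ g) /andP [] ] := vp v. Qed.

Lemma ord2P (P : 'I_2 -> Prop) : P f0 -> P f1 -> forall g, P g.
Proof. by move=> H0 H1 g; case: (ord2 g) => ->. Qed.

Section Sub2.
Variable R : realType.
Implicit Types (s : FPP 'I_4 'I_2) (p : cprofile 'I_4 'I_2 R).

Ltac pv H := let a := fresh in let b := fresh in
  have a := H f0; have b := H f1; rewrite /= in a b.
Ltac frc ce h0 h1 := apply: (forced ce); [by rewrite /Ns ?h0 ?h1 |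
  apply: ord2P; rewrite /Ns ?h0 ?h1 //= => _ _;
  rewrite !lmE !wRE /= ?mulr1n ?mulr0n; lra].
Ltac unc_ ce h0 h1 := apply: (unc ce); apply: ord2P; by rewrite /Ns ?h0 ?h1.
Ltac fin := rewrite !loadE !wRE; split; lra.

Lemma sg23 s p : client_equilibrium Eex wex s p -> s f0 = v2 -> s f1 = v3 ->
  load wex p f0 = 11%:R /\ load wex p f1 = 7%:R.
Proof.
move=> ce h0 h1.
have P0 : forall g, p v0 g = (g == f0)%:R by frc ce h0 h1. pv P0.
have P2 : forall g, p v2 g = (g == f0)%:R by frc ce h0 h1. pv P2.
have P3 : forall g, p v3 g = (g == f1)%:R by frc ce h0 h1. pv P3.
have P1 : forall g, p v1 g = (g == f1)%:R by frc ce h0 h1. pv P1.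
fin.
Qed.

Lemma sg21 s p : client_equilibrium Eex wex s p -> s f0 = v2 -> s f1 = v1 ->
  load wex p f0 = 6%:R /\ load wex p f1 = 9%:R.
Proof.
move=> ce h0 h1.
have P2 : forall g, p v2 g = (g == f0)%:R by frc ce h0 h1. pv P2.
have P3 : forall g, p v3 g = 0 by unc_ ce h0 h1. pv P3.
have := bnd v1 f0 ce; have := bnd v1 f1 ce; move=> [? ?] [? ?].
have P0 : forall g, p v0 g = (g == f1)%:R by frc ce h0 h1. pv P0.
have P1 : forall g, p v1 g = (g == f1)%:R by frc ce h0 h1. pv P1.
fin.
Qed.

Lemma sg03 s p : client_equilibrium Eex wex s p -> s f0 = v0 -> s f1 = v3 ->
  load wex p f0 = 5%:R /\ load wex p f1 = 7%:R.
Proof.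
move=> ce h0 h1.
have P0 : forall g, p v0 g = (g == f0)%:R by frc ce h0 h1. pv P0.
have P1 : forall g, p v1 g = (g == f1)%:R by frc ce h0 h1. pv P1.
have P2 : forall g, p v2 g = 0 by unc_ ce h0 h1. pv P2.
have P3 : forall g, p v3 g = (g == f1)%:R by frc ce h0 h1. pv P3.
fin.
Qed.

Lemma sg01 s p : client_equilibrium Eex wex s p -> s f0 = v0 -> s f1 = v1 ->
  load wex p f0 = 8%:R /\ load wex p f1 = 4%:R.
Proof.
move=> ce h0 h1.
have P3 : forall g, p v3 g = (g == f0)%:R by frc ce h0 h1. pv P3.
have P1 : forall g, p v1 g = (g == f1)%:R by frc ce h0 h1. pv P1.
have P2 : forall g, p v2 g = 0 by unc_ ce h0 h1. pv P2.
have P0 : forall g, p v0 g = (g == f0)%:R by frc ce h0 h1. pv P0.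
fin.
Qed.
End Sub2.

Lemma feas_move (s : FPP 'I_4 'I_2) f x : feasible Uex s -> x \in Uex f -> feasible Uex (move s f x).
Proof. by move=> H hx g; rewrite /move ffunE; case: eqP => [->|]. Qed.

Lemma mv0 (s : FPP 'I_4 'I_2) x : (move s f0 x) f0 = x /\ (move s f0 x) f1 = s f1.
Proof. by rewrite /move !ffunE. Qed.
Lemma mv1 (s : FPP 'I_4 'I_2) x : (move s f1 x) f0 = s f0 /\ (move s f1 x) f1 = x.
Proof. by rewrite /move !ffunE. Qed.

Theorem mainTheorem2 :
  exists (V F : finType) (E : rel V) (w : V -> rat) (U : F -> {set V}),
    (forall v, 0 < w v) /\ (forall f, U f != set0) /\
    forall (R : realType) (s : FPP V F) (sigma : full_profile V F R),
      ~ SPE E w U s sigma.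
Proof.
exists 'I_4, 'I_2, Eex, wex, Uex.
split.
  by move=> v; case: (ord4 v) => ->; rewrite /wex /= ltr0n.
split.
  by move=> f; apply/set0Pn; case: (ord2 f) => ->; [exists v2|exists v3]; rewrite /Uex /= !inE eqxx.
move=> R s sigma [feas [fce nodev]]; apply: nodev.
have [a0|a0] : s f0 = v2 \/ s f0 = v0 by have := feas f0; rewrite /Uex /= => /set2P.
all: have [a1|a1] : s f1 = v3 \/ s f1 = v1 by have := feas f1; rewrite /Uex /= => /set2P.
- exists f1, v1; split; first by rewrite /Uex /= !inE eqxx orbT.
  have [_ l1] := sg23 (fce s feas) a0 a1.
  have fm : feasible Uex (move s f1 v1) by apply: feas_move => //; rewrite /Uex /= !inE eqxx orbT.
  have [m0 m1] := mv1 s v1.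
  have [_ l1'] := sg21 (fce _ fm) (etrans m0 a0) m1.
  by rewrite l1 l1' ltr_nat.
- exists f0, v0; split; first by rewrite /Uex /= !inE eqxx orbT.
  have [l0 _] := sg21 (fce s feas) a0 a1.
  have fm : feasible Uex (move s f0 v0) by apply: feas_move => //; rewrite /Uex /= !inE eqxx orbT.
  have [m0 m1] := mv0 s v0.
  have [l0' _] := sg01 (fce _ fm) m0 (etrans m1 a1).
  by rewrite l0 l0' ltr_nat.
- exists f0, v2; split; first by rewrite /Uex /= !inE eqxx.
  have [l0 _] := sg03 (fce s feas) a0 a1.
  have fm : feasible Uex (move s f0 v2) by apply: feas_move => //; rewrite /Uex /= !inE eqxx.
  have [m0 m1] := mv0 s v2.
  have [l0' _] := sg23 (fce _ fm) m0 (etrans m1 a1).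
  by rewrite l0 l0' ltr_nat.
- exists f1, v3; split; first by rewrite /Uex /= !inE eqxx.
  have [_ l1] := sg01 (fce s feas) a0 a1.
  have fm : feasible Uex (move s f1 v3) by apply: feas_move => //; rewrite /Uex /= !inE eqxx.
  have [m0 m1] := mv1 s v3.
  have [_ l1'] := sg03 (fce _ fm) (etrans m0 a0) m1.
  by rewrite l1 l1' ltr_nat.
Qed.
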